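(* Let $\bm{A}\in\mathbb{R}^{M\times M}$ be diagonal with $\sigma_{\max}(\bm{A})<1$ (largest singular value), $\bm{W}\in\mathbb{R}^{M\times M}$, $\bm{h}_0\in\mathbb{R}^M$, $\alpha_1,\dots,\alpha_B\in\mathbb{R}$, $\bm{h}_1,\dots,\bm{h}_B\in\mathbb{R}^M$. Consider the ''clipped'' dendPLRNN $$\bm{z}_t=\bm{A}\bm{z}_{t-1}+\bm{W}\sum_{b=1}^B\alpha_b\big[\max(0,\bm{z}_{t-1}-\bm{h}_b)-\max(0,\bm{z}_{t-1})\big]+\bm{h}_0,$$ obtained from the dendPLRNN by adding, for each basis $(\alpha_b,\bm{h}_b)$, a basis $(-\alpha_b,\bm{0})$. Then for every initial condition $\bm{z}_1\in\mathbb{R}^M$ the orbit $(\bm{z}_t)_{t\ge1}$ is bounded.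
   Context: $\max$ is taken componentwise. *)

(* Defs.v *)
From HB Require Import structures.
From mathcomp Require Import all_boot all_order all_algebra.
From mathcomp Require Import classical_sets reals.
Set Implicit Arguments. Unset Strict Implicit. Unset Printing Implicit Defensive.
Import Order.TTheory GRing.Theory Num.Theory.
Local Open Scope ring_scope.

Definition norm2 (R : realType) (M : nat) (x : 'cV[R]_M) : R :=
  Num.sqrt (\sum_(i < M) x i 0 ^+ 2).

(* Largest singular value = operator 2-norm = sup_{|x|_2 = 1} |A x|_2. *)
Definition sigma_max (R : realType) (M : nat) (A : 'M[R]_M) : R :=
  reals.sup [set norm2 (A *m x) | x in [set x : 'cV[R]_M | norm2 x = 1]]%classic.

Definition relu (R : realType) (M : nat) (x : 'cV[R]_M) : 'cV[R]_M :=
  map_mx (fun r => Num.max 0 r) x.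

Definition clipped_step (R : realType) (M B : nat) (A W : 'M[R]_M)
  (h0 : 'cV[R]_M) (alpha : 'I_B -> R) (h : 'I_B -> 'cV[R]_M) (z : 'cV[R]_M)
  : 'cV[R]_M :=
  A *m z + W *m (\sum_(b < B) alpha b *: (relu (z - h b) - relu z)) + h0.

(* orbit t = z_{t+1}, i.e. orbit 0 = z_1. *)
Definition clipped_orbit (R : realType) (M B : nat) (A W : 'M[R]_M)
  (h0 : 'cV[R]_M) (alpha : 'I_B -> R) (h : 'I_B -> 'cV[R]_M) (z1 : 'cV[R]_M)
  (t : nat) : 'cV[R]_M :=
  iter t (clipped_step A W h0 alpha h) z1.

(* Main.v *)
Require Import Defs.
From HB Require Import structures.
From mathcomp Require Import all_boot all_order all_algebra.
From mathcomp Require Import classical_sets reals.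
From mathcomp Require Import lra.
Import Order.TTheory GRing.Theory Num.Theory.
Local Open Scope ring_scope.

Lemma relu_lip (R : realType) (x y : R) :
  `|Num.max 0 x - Num.max 0 y| <= `|x - y|.
Proof.
rewrite /Num.max.
case: (ltrP 0 x) => hx; case: (ltrP 0 y) => hy.
- by [].
- rewrite subr0 !ger0_norm; lra.
- rewrite sub0r normrN (gtr0_norm hy) ler0_norm; lra.
- by rewrite subrr normr0.
Qed.

Lemma diag_norm2 (R : realType) (M : nat) (d : 'rV[R]_M) (x : 'cV[R]_M) :
  norm2 (diag_mx d *m x) = Num.sqrt (\sum_(i < M) (d 0 i * x i 0) ^+ 2).
Proof. by rewrite /norm2 mul_diag_mx; apply: congr1; apply: eq_bigr => i _; rewrite mxE. Qed.

Lemma diag_lt1 (R : realType) (M : nat) (d : 'rV[R]_M) (i : 'I_M) :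
  sigma_max (diag_mx d) < 1 -> `|d 0 i| < 1.
Proof.
move=> hs; apply: le_lt_trans hs.
set S := \sum_(k < M) d 0 k ^+ 2.
have S0 : 0 <= S by apply: sumr_ge0 => k _; exact: sqr_ge0.
have hdS : forall j, d 0 j ^+ 2 <= S.
  move=> j; rewrite /S (bigD1 j) //= lerDl.
  by apply: sumr_ge0 => k _; exact: sqr_ge0.
have e1 : norm2 (delta_mx i 0 : 'cV[R]_M) = 1.
  rewrite /norm2 (bigD1 i) //= big1 ?mxE ?eqxx ?addr0 ?expr1n ?sqrtr1 //.
  by move=> k /negbTE hk; rewrite mxE hk /= expr0n.
have -> : `|d 0 i| = norm2 (diag_mx d *m delta_mx i 0).
  rewrite diag_norm2 (bigD1 i) //= big1 ?mxE ?eqxx ?addr0 ?mulr1 ?sqrtr_sqr //.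
  by move=> k /negbTE hk; rewrite mxE hk /= mulr0 expr0n.
apply: sup_upper_bound; last by exists (delta_mx i 0).
split; first by exists (norm2 (diag_mx d *m delta_mx i 0)), (delta_mx i 0).
exists (Num.sqrt S) => _ [x /= hx <-].
rewrite diag_norm2 ler_sqrt //.
have sx : \sum_(k < M) x k 0 ^+ 2 = 1.
  move: hx; rewrite /norm2 => hx.
  by rewrite -[LHS]sqr_sqrtr ?sumr_ge0 // ?hx ?expr1n // => k _; exact: sqr_ge0.
rewrite -[S]mulr1 -sx mulr_sumr; apply: ler_sum => k _.
rewrite exprMn; apply: ler_wpM2r; [exact: sqr_ge0 | exact: hdS].
Qed.
Definition Kc (R : realType) (M B : nat) (W : 'M[R]_M)
  (h0 : 'cV[R]_M) (alpha : 'I_B -> R) (h : 'I_B -> 'cV[R]_M) (i : 'I_M) : R :=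
  \sum_j `|W i j| * (\sum_b `|alpha b| * `|h b j 0|) + `|h0 i 0|.

Lemma step_bound (R : realType) (M B : nat) (d : 'rV[R]_M) (W : 'M[R]_M)
  (h0 : 'cV[R]_M) (alpha : 'I_B -> R) (h : 'I_B -> 'cV[R]_M) z i :
  `|(clipped_step (diag_mx d) W h0 alpha h z) i 0 - d 0 i * z i 0|
    <= @Kc R M B W h0 alpha h i.
Proof.
rewrite /clipped_step mul_diag_mx !mxE.
set s := \sum_j _.
have -> : d 0 i * z i 0 + s + h0 i 0 - d 0 i * z i 0 = s + h0 i 0 by lra.
apply: le_trans (ler_normD _ _) _; apply: lerD => //.
rewrite /s; apply: le_trans (ler_norm_sum _ _ _) _.
apply: ler_sum => j _; rewrite normrM; apply: ler_wpM2l => //.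
rewrite summxE; apply: le_trans (ler_norm_sum _ _ _) _.
apply: ler_sum => b _; rewrite mxE normrM; apply: ler_wpM2l => //.
rewrite /relu !mxE.
have := @relu_lip R (z j 0 - h b j 0) (z j 0).
have -> : z j 0 - h b j 0 - z j 0 = - h b j 0 by lra.
by rewrite normrN.
Qed.

Theorem theorem2 (R : realType) (M B : nat) (A W : 'M[R]_M) (h0 : 'cV[R]_M)
  (alpha : 'I_B -> R) (h : 'I_B -> 'cV[R]_M)
  (hAdiag : is_diag_mx A) (hA : sigma_max A < 1) :
  forall z1 : 'cV[R]_M, exists C : R,
    forall t : nat, norm2 (clipped_orbit A W h0 alpha h z1 t) <= C.
Proof.
move=> z1; case/diag_mxP: hAdiag => d hd; subst A.
pose C i := Num.max `|z1 i 0| (@Kc R M B W h0 alpha h i / (1 - `|d 0 i|)).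
have key : forall t i, `|clipped_orbit (diag_mx d) W h0 alpha h z1 t i 0| <= C i.
  elim=> [|t IH] i.
    by rewrite /clipped_orbit /= /C le_max lexx.
  rewrite /clipped_orbit iterS -/(clipped_orbit _ _ _ _ _ _ t).
  set z := clipped_orbit _ _ _ _ _ _ t.
  have h1 := @step_bound R M B d W h0 alpha h z i.
  set y := clipped_step _ _ _ _ _ z.
  have h2 : `|y i 0| <= `|y i 0 - d 0 i * z i 0| + `|d 0 i * z i 0|.
    by apply: le_trans (ler_normD _ _); rewrite subrK.
  have hd1 := @diag_lt1 R M d i hA.
  have h3 : `|d 0 i| * `|z i 0| <= `|d 0 i| * C i by apply: ler_wpM2l.
  have h4 : @Kc R M B W h0 alpha h i <= C i * (1 - `|d 0 i|).
    rewrite -ler_pdivrMr ?subr_gt0 // /C le_max lexx orbT //.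
  rewrite normrM in h2; lra.
exists (Num.sqrt (\sum_i C i ^+ 2)) => t.
rewrite /norm2 ler_sqrt; last by apply: sumr_ge0 => i _; exact: sqr_ge0.
apply: ler_sum => i _.
rewrite -real_normK ?num_real // !expr2.
by apply: ler_pM => //; exact: key.
Qed.
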